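(* Let $p$ be a prime, $m\ge1$, $s\ge0$ integers, $R^4=\mathbb{F}_{p^m}[u]/\langle u^4\rangle$, $f(x)\in\mathbb{F}_{p^m}[x]$ irreducible, $\omega(x)=f(x)^{p^s}$, $R^{4,\omega}=R^4[x]/\langle\omega(x)\rangle$, $R^{1,\omega}=\mathbb{F}_{p^m}[x]/\langle\omega(x)\rangle$. Let $a,t_1,t_2$ be integers with $0\le t_2<t_1<a\le p^s-1$ and let $h_1(x),h_2(x)\in R^{1,\omega}$ each be either $0$ or a unit of $R^{1,\omega}$. Let $L$ be the smallest non-negative integer such that $u^3f(x)^L\in\langle uf(x)^a+u^2f(x)^{t_1}h_1(x)+u^3f(x)^{t_2}h_2(x)\rangle$ (ideal of $R^{4,\omega}$). Then $$L=\begin{cases} a, & h_1=h_2=0,\\ \min\{a,\ p^s-a+t_2\}, & h_1=0,\ h_2\ne0,\\ \min\{a,\ p^s-2(a-t_1)\}, & h_1\ne0,\ h_2=0,\ a\le p^s-a+t_1,\\ t_1, & h_1\ne0,\ h_2=0,\ a\ge p^s-a+t_1,\\ \min\{a,\ p^s-a+t_1,\ \beta_1\}, & h_1\ne0,\ h_2\ne0,\ a\le p^s-a+t_1,\\ \min\{a,\ p^s+t_2-t_1,\ \beta_2\}, & h_1\ne0,\ h_2\ne0,\ a\ge p^s-a+t_1, \end{cases}$$ where $\beta_1=\max\{k: f(x)^k \text{ divides } f(x)^{p^s-a+t_2}h_2(x)-f(x)^{p^s-2a+2t_1}h_1(x)^2\}$ and $\beta_2=\max\{k: f(x)^k \text{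 divides } f(x)^{t_1}h_1(x)-f(x)^{a+t_2-t_1}h_2(x)h_1(x)^{-1}\}$, divisibility being taken in $R^{1,\omega}$.
   Context: $R^{1,\omega}$ is identified with the subring of $R^{4,\omega}$ consisting of classes of polynomials over $\mathbb{F}_{p^m}$ (no $u$). *)

(* Defs.v *)
From HB Require Import structures.
From mathcomp Require Import all_boot all_order all_algebra all_field.
Set Implicit Arguments. Unset Strict Implicit. Unset Printing Implicit Defensive.
Import GRing.Theory.
Local Open Scope ring_scope.

(* Elements of R^{1,w} = F[x]/<w> are represented by polynomials of {poly F}
   (representatives); elements of R^{4,w} = (F[u]/<u^4>)[x]/<w>
   = F[x,u]/<u^4, w(x)> by bivariate polynomials {poly {poly F}}, where the
   OUTER variable 'X is u and the coefficients are polynomials in x. *)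

Section Defs.
Variable F : fieldType.

Definition is_zero1 (w h : {poly F}) : Prop := w %| h.
Definition is_unit1 (w h : {poly F}) : Prop := exists v : {poly F}, w %| h * v - 1.
Definition divides1 (w d X : {poly F}) : Prop := exists c : {poly F}, w %| d * c - X.

Definition eq4 (w : {poly F}) (z1 z2 : {poly {poly F}}) : Prop :=
  exists q1 q2 : {poly {poly F}}, z1 - z2 = 'X ^+ 4 * q1 + w%:P * q2.
Definition in_ideal4 (w : {poly F}) (g z : {poly {poly F}}) : Prop :=
  exists r : {poly {poly F}}, eq4 w z (r * g).

Definition gen4 (f : {poly F}) (a t1 t2 : nat) (h1 h2 : {poly F}) : {poly {poly F}} :=
  'X * (f ^+ a)%:P + 'X ^+ 2 * (f ^+ t1 * h1)%:P + 'X ^+ 3 * (f ^+ t2 * h2)%:P.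

Definition least_exp (w f : {poly F}) (g : {poly {poly F}}) (L : nat) : Prop :=
  in_ideal4 w g ('X ^+ 3 * (f ^+ L)%:P) /\
  forall k : nat, in_ideal4 w g ('X ^+ 3 * (f ^+ k)%:P) -> (L <= k)%N.

Definition is_max_div (w f X : {poly F}) (b : nat) : Prop :=
  divides1 w (f ^+ b) X /\ forall k : nat, divides1 w (f ^+ k) X -> (k <= b)%N.

(* L = min{m0, beta} where beta = max{k : f^k divides X in R^{1,w}};
   if every f^k divides X (X = 0), beta = +oo and the minimum is m0. *)
Definition eq_min_beta (w f X : {poly F}) (m0 L : nat) : Prop :=
  (forall b : nat, is_max_div w f X b -> L = minn m0 b) /\
  ((forall k : nat, divides1 w (f ^+ k) X) -> L = m0).
End Defs.

(* Main.v *)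
Require Import Defs.
From HB Require Import structures.
From mathcomp Require Import all_boot all_order all_algebra all_field.
From mathcomp Require Import ring zify.
Import GRing.Theory.
Local Open Scope ring_scope.

Section Aux.
Variable F : fieldType.

Lemma eq4_coef (w : {poly F}) (z1 z2 : {poly {poly F}}) :
  eq4 w z1 z2 -> forall i, (i < 4)%N -> w %| (z1 - z2)`_i.
Proof.
move=> [q1 [q2 ->]] i Hi.
by rewrite coefD coefXnM Hi add0r coefCM dvdp_mulr.
Qed.

Lemma coef_eq4 (w : {poly F}) (z1 z2 : {poly {poly F}}) :
  (forall i, (i < 4)%N -> w %| (z1 - z2)`_i) -> eq4 w z1 z2.
Proof.
move=> H; set d := z1 - z2.
exists (\poly_(i < size d) d`_(i + 4)), (\poly_(i < 4) (d`_i %/ w)).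
apply/polyP => i.
rewrite [RHS]coefD coefXnM coefCM coef_poly.
case: ltnP => Hi.
  by rewrite add0r coef_poly Hi mulrC divpK //; exact: H.
rewrite coef_poly (_ : (i < 4)%N = false); last by lia.
rewrite mulr0 addr0 subnK //.
case: ltnP => // Hs.
apply: nth_default; apply: leq_trans Hs _; exact: leq_subr.
Qed.

Definition IMem (w A B C c : {poly F}) := exists r0 r1 r2 : {poly F},
  [/\ w %| r0 * A, w %| r1 * A + r0 * B & w %| c - (r2 * A + r1 * B + r0 * C)].

Lemma mem_iff (w A B C c : {poly F}) :
  in_ideal4 w ('X * A%:P + 'X ^+ 2 * B%:P + 'X ^+ 3 * C%:P) ('X ^+ 3 * c%:P)
  <-> IMem w A B C c.
Proof.
have cg : forall (r : {poly {poly F}}) i,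
  (r * ('X * A%:P + 'X ^+ 2 * B%:P + 'X ^+ 3 * C%:P))`_i =
  (if i == 0%N then 0 else r`_i.-1 * A) +
  (if (i < 2)%N then 0 else r`_(i - 2) * B) +
  (if (i < 3)%N then 0 else r`_(i - 3) * C).
  move=> r i; rewrite !mulrDr [r * ('X * _)]mulrA [r * ('X ^+ 2 * _)]mulrA [r * ('X ^+ 3 * _)]mulrA !coefD !coefMC coefMX !coefMXn.
  by case: (i == 0%N); case: (i < 2)%N; case: (i < 3)%N; rewrite ?mul0r.
split.
  move=> [r Hr]; exists r`_0, r`_1, r`_2.
  have := @eq4_coef _ _ _ Hr; set g := (X in r * X) => H.
  have H1 := H 1%N isT; have H2 := H 2%N isT; have H3 := H 3%N isT.
  rewrite !coefB !cg !coefXnM /= !subnn (_ : (3 - 2 = 1)%N) // coefC /= in H1 H2 H3.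
  rewrite !addr0 sub0r dvdpNr in H1; rewrite addr0 sub0r dvdpNr in H2.
  by split.
move=> [r0 [r1 [r2 [H1 H2 H3]]]].
exists (r0%:P + 'X * r1%:P + 'X ^+ 2 * r2%:P).
apply: coef_eq4 => i Hi; rewrite coefB cg coefXnM.
have ce : forall j, (r0%:P + 'X * r1%:P + 'X ^+ 2 * r2%:P : {poly {poly F}})`_j
   = if j == 0%N then r0 else if j == 1%N then r1 else if j == 2%N then r2 else 0.
  move=> j; rewrite !coefD coefC mulrC coefMX coefXnM !coefC.
  by case: j => [|[|[|j]]] /=; rewrite ?addr0 ?add0r.
case: i Hi => [|[|[|[|i]]]] //= _.
all: rewrite ?ce /= ?subnn ?(_ : (3 - 2 = 1)%N) // ?coefC /= ?mulr1 ?mulr0 ?addr0 ?add0r ?subr0 ?sub0r ?dvdpNr ?dvdp0 //.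
Qed.
End Aux.
Arguments IMem {F}.


Set Implicit Arguments. Unset Strict Implicit.
Section Val.
Variable F : fieldType.
Variable f : {poly F}.
Hypothesis Hf : irreducible_poly f.

Lemma f_neq0 : f != 0.
Proof. by apply/eqP => f0; have := Hf.1; rewrite f0 size_poly0. Qed.

Lemma fX_neq0 n : f ^+ n != 0.
Proof. exact: expf_neq0 f_neq0. Qed.

Lemma pow_dvd_le m n : f ^+ m %| f ^+ n -> (m <= n)%N.
Proof.
move=> H; have L := dvdp_leq (fX_neq0 n) H.
have e1 := size_exp f m; have e2 := size_exp f n.
have p1 : (0 < size (f ^+ m))%N by rewrite size_poly_gt0 fX_neq0.
have p2 : (0 < size (f ^+ n))%N by rewrite size_poly_gt0 fX_neq0.
have sf := Hf.1.
rewrite -(prednK p1) -(prednK p2) e1 e2 ltnS leq_pmul2l in L => //.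
by rewrite -ltnS prednK // ltnW.
Qed.

Lemma fdvd m n : (m <= n)%N -> f ^+ m %| f ^+ n.
Proof. exact: dvdp_exp2l. Qed.

Lemma notdvd1 : ~~ (f %| 1).
Proof. by rewrite dvdp1; have := Hf.1; case: (size f) => [|[|k]]. Qed.

Lemma unit_nd N h v : (0 < N)%N -> f ^+ N %| h * v - 1 -> ~~ (f %| h) /\ ~~ (f %| v).
Proof.
move=> HN H.
have fN : f %| f ^+ N by rewrite -{1}(expr1 f); apply: fdvd.
have H' := dvdp_trans fN H.
split; apply/negP => fh; move: H'.
  by rewrite dvdp_subr ?(negbTE notdvd1) // dvdp_mulr.
by rewrite dvdp_subr ?(negbTE notdvd1) // dvdp_mull.
Qed.

Lemma gauss n p q : ~~ (f %| q) -> f ^+ n %| p * q -> f ^+ n %| p.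
Proof.
by move=> nq; rewrite Gauss_dvdpl // coprimep_expl // irreducible_poly_coprime.
Qed.

Lemma fcancel m n q : f ^+ (m + n) %| f ^+ m * q -> f ^+ n %| q.
Proof. by rewrite exprD dvdp_mul2l // fX_neq0. Qed.

Lemma finv N c : ~~ (f %| c) -> exists V, f ^+ N %| c * V - 1.
Proof.
move=> nc.
have : coprimep (f ^+ N) c by rewrite coprimep_expl // irreducible_poly_coprime.
move/Bezout_eq1_coprimepP => [u Hu]; exists u.2.
rewrite -Hu (_ : c * u.2 - (u.1 * f ^+ N + u.2 * c) = - (u.1 * f ^+ N)); last by ring.
by rewrite dvdpNr dvdp_mull.
Qed.

Lemma dvd_by (d X q : {poly F}) : X = q * d -> d %| X.
Proof. by move=> ->; rewrite dvdp_mull. Qed.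

Lemma exact N X E : divides1 (f ^+ N) (f ^+ E) X ->
  (forall k, divides1 (f ^+ N) (f ^+ k) X -> (k <= E)%N) ->
  exists c, f ^+ N %| f ^+ E * c - X /\ ~~ (f %| c).
Proof.
move=> [c Hc] Hmax; exists c; split => //.
apply/negP => /dvdpP [c' Ec].
have : divides1 (f ^+ N) (f ^+ E.+1) X.
  by exists c'; rewrite (_ : f ^+ E.+1 * c' = f ^+ E * c) // Ec exprS; ring.
by move/Hmax; rewrite ltnn.
Qed.

Lemma lb N e k T : (e <= N)%N -> f ^+ e %| T -> f ^+ N %| f ^+ k - T -> (e <= k)%N.
Proof.
move=> eN eT H; apply: pow_dvd_le.
have := dvdp_trans (fdvd eN) H.
by rewrite dvdp_subl.
Qed.

Lemma wit0 N (A B C : {poly F}) : IMem (f ^+ N) A B C A.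
Proof.
exists 0, 0, 1; rewrite !mul0r !mul1r addr0 !addr0 subrr; split; exact: dvdp0.
Qed.

Lemma dvd_mul_eq (d X Y q : {poly F}) : d %| Y -> X = q * Y -> d %| X.
Proof. by move=> H ->; apply: dvdp_mull. Qed.

Lemma dvd_sum2 (d X Y1 Y2 q1 q2 : {poly F}) :
  d %| Y1 -> d %| Y2 -> X = q1 * Y1 + q2 * Y2 -> d %| X.
Proof. by move=> H1 H2 ->; apply: dvdp_add; apply: dvdp_mull. Qed.

Lemma dvd_sum3 (d X Y1 Y2 Y3 q1 q2 q3 : {poly F}) :
  d %| Y1 -> d %| Y2 -> d %| Y3 -> X = q1 * Y1 + q2 * Y2 + q3 * Y3 -> d %| X.
Proof. by move=> H1 H2 H3 ->; apply: dvdp_add; [apply: dvdp_add|]; apply: dvdp_mull. Qed.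

Lemma hd e N h : (e <= N)%N -> f ^+ N %| h -> f ^+ e %| h.
Proof. by move=> eN H; apply: dvdp_trans (fdvd eN) H. Qed.

Lemma div_weak N E k X : (k <= E)%N -> divides1 (f ^+ N) (f ^+ E) X ->
  divides1 (f ^+ N) (f ^+ k) X.
Proof.
move=> kE [c Hc]; exists (f ^+ (E - k) * c).
by rewrite mulrA -exprD subnKC.
Qed.

Lemma div_dvd N k X : (k <= N)%N -> divides1 (f ^+ N) (f ^+ k) X -> f ^+ k %| X.
Proof.
move=> kN [c Hc]; have := hd kN Hc.
by rewrite dvdp_subr // dvdp_mulr.
Qed.

Definition Good N a t1 t2 h1 h2 e :=
  IMem (f ^+ N) (f ^+ a) (f ^+ t1 * h1) (f ^+ t2 * h2) (f ^+ e) /\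
  forall k, IMem (f ^+ N) (f ^+ a) (f ^+ t1 * h1) (f ^+ t2 * h2) (f ^+ k) -> (e <= k)%N.

Lemma case1 N a t1 t2 h1 h2 : (a <= N)%N -> f ^+ N %| h1 -> f ^+ N %| h2 ->
  Good N a t1 t2 h1 h2 a.
Proof.
move=> aN H1 H2; split; first exact: wit0.
move=> k [r0 [r1 [r2 [_ _ H]]]]; apply: (lb aN _ H).
apply: dvdp_add; first apply: dvdp_add.
- by apply: dvdp_mull; apply: dvdpp.
- by do 2 apply: dvdp_mull; apply: hd aN H1.
- by do 2 apply: dvdp_mull; apply: hd aN H2.
Qed.

Lemma case2 N a t1 t2 h1 h2 v2 : (t2 < t1)%N -> (t1 < a)%N -> (a < N)%N ->
  f ^+ N %| h1 -> f ^+ N %| h2 * v2 - 1 ->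
  Good N a t1 t2 h1 h2 (minn a (N - a + t2)).
Proof.
move=> l1 l2 l3 H1 H2.
have [n [En Ee]] : exists n, (N = a + n)%N /\ (N - a + t2 = n + t2)%N.
  by exists (N - a)%N; split; lia.
rewrite Ee; subst N; split.
  case: (leqP a (n + t2)) => h.
    exact: wit0.
  exists (f ^+ n * v2), 0, 0; split.
  - by apply: (dvd_by (q := v2)); rewrite !exprD; ring.
  - by rewrite mul0r add0r; do 2 apply: dvdp_mull.
  - apply: (dvd_mul_eq (q := - f ^+ (n + t2)) H2); rewrite !exprD; ring.
move=> k [r0 [r1 [r2 [G1 _ G3]]]].
have : f ^+ (a + n) %| f ^+ a * r0 by rewrite mulrC.
move/fcancel/dvdpP => [c0 Ec0]; subst r0.
have eN : (minn a (n + t2) <= a + n)%N by lia.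
apply: (lb eN _ G3).
apply: dvdp_add; first apply: dvdp_add.
- by apply: dvdp_mull; apply: fdvd; lia.
- by do 2 apply: dvdp_mull; apply: hd eN H1.
- apply: (dvd_mul_eq (q := c0 * h2) (fdvd (geq_minr a (n + t2)))).
  by rewrite exprD; ring.
Qed.

Lemma case3 N a t1 t2 h1 h2 v1 : (t2 < t1)%N -> (t1 < a)%N -> (a < N)%N ->
  f ^+ N %| h1 * v1 - 1 -> f ^+ N %| h2 -> (a <= N - a + t1)%N ->
  Good N a t1 t2 h1 h2 (minn a (N + 2 * t1 - 2 * a)).
Proof.
move=> l1 l2 l3 Hu H2 l4.
have [y [z [Ea [En Ee]]]] : exists y z, [/\ (a = t1 + y)%N, (N = a + y + z)%N &
   (N + 2 * t1 - 2 * a = z + t1)%N].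
  by exists (a - t1)%N, (N - a - (a - t1))%N; split; lia.
rewrite Ee; subst N; subst a; split.
  case: (leqP (t1 + y) (z + t1)) => h; first exact: wit0.
  exists (-(f ^+ (y + z) * v1 ^+ 2)), (f ^+ z * v1 ^+ 2 * h1), 0; split.
  - by apply: (dvd_by (q := - v1 ^+ 2)); rewrite !exprD; ring.
  - by apply: (dvd_by (q := 0)); rewrite !exprD; ring.
  - apply: (dvd_sum2 (q1 := - f ^+ (z + t1) * (h1 * v1 + 1))
       (q2 := f ^+ (y + z) * v1 ^+ 2 * f ^+ t2) Hu H2).
    by rewrite !exprD; ring.
move=> k [r0 [r1 [r2 [G1 G2 G3]]]].
have : f ^+ ((t1 + y) + (y + z)) %| f ^+ (t1 + y) * r0 by rewrite !addnA mulrC.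
move/fcancel/dvdpP => [c0 Ec0]; subst r0.
have P1 : f ^+ (t1 + y + z) %| c0 * f ^+ (y + z) * (f ^+ t1 * h1).
  by apply: (dvd_by (q := c0 * h1)); rewrite !exprD; ring.
have le1 : (t1 + y + z <= t1 + y + y + z)%N by lia.
have := dvdp_trans (fdvd le1) G2.
rewrite dvdp_addl //.
rewrite mulrC => /fcancel /dvdpP [c1 Ec1]; subst r1.
have eN : (minn (t1 + y) (z + t1) <= t1 + y + y + z)%N by lia.
apply: (lb eN _ G3).
apply: dvdp_add; first apply: dvdp_add.
- by apply: dvdp_mull; apply: fdvd; lia.
- apply: (dvd_mul_eq (q := c1 * h1) (fdvd (geq_minr (t1 + y) (z + t1)))).
  by rewrite !exprD; ring.
- by do 2 apply: dvdp_mull; apply: hd eN H2.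
Qed.

Lemma case4 N a t1 t2 h1 h2 v1 : (t2 < t1)%N -> (t1 < a)%N -> (a < N)%N ->
  f ^+ N %| h1 * v1 - 1 -> f ^+ N %| h2 -> (N - a + t1 <= a)%N ->
  Good N a t1 t2 h1 h2 t1.
Proof.
move=> l1 l2 l3 Hu H2 l4.
have [n [z [Ea En]]] : exists n z, (a = t1 + n + z)%N /\ (N = a + n)%N.
  by exists (N - a)%N, (a - t1 - (N - a))%N; split; lia.
subst N; subst a; split.
  exists (-(f ^+ (n + z) * v1 ^+ 2)), (v1 ^+ 2 * h1), 0; split.
  - by apply: (dvd_by (q := - (v1 ^+ 2 * f ^+ z))); rewrite !exprD; ring.
  - by apply: (dvd_by (q := 0)); rewrite !exprD; ring.
  - apply: (dvd_sum2 (q1 := - f ^+ t1 * (h1 * v1 + 1))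
       (q2 := f ^+ (n + z) * v1 ^+ 2 * f ^+ t2) Hu H2).
    by rewrite !exprD; ring.
move=> k [r0 [r1 [r2 [G1 G2 G3]]]].
have eN : (t1 <= t1 + n + z + n)%N by lia.
apply: (lb eN _ G3).
apply: dvdp_add; first apply: dvdp_add.
- by apply: dvdp_mull; apply: fdvd; lia.
- by apply: dvdp_mull; apply: dvdp_mulr; apply: dvdpp.
- by do 2 apply: dvdp_mull; apply: hd eN H2.
Qed.

Lemma dvd_sum4 (d X Y1 Y2 Y3 Y4 q1 q2 q3 q4 : {poly F}) :
  d %| Y1 -> d %| Y2 -> d %| Y3 -> d %| Y4 ->
  X = q1 * Y1 + q2 * Y2 + q3 * Y3 + q4 * Y4 -> d %| X.
Proof.
by move=> H1 H2 H3 H4 ->; apply: dvdp_add; [apply: dvdp_add; [apply: dvdp_add|]|]; apply: dvdp_mull.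
Qed.

Lemma case5 N a t1 t2 h1 h2 v1 E : (t2 < t1)%N -> (t1 < a)%N -> (a < N)%N ->
  f ^+ N %| h1 * v1 - 1 -> (a <= N - a + t1)%N ->
  divides1 (f ^+ N) (f ^+ E)
    (f ^+ (N - a + t2) * h2 - f ^+ (N + 2 * t1 - 2 * a) * h1 ^+ 2) ->
  ((E < N)%N -> forall k, divides1 (f ^+ N) (f ^+ k)
    (f ^+ (N - a + t2) * h2 - f ^+ (N + 2 * t1 - 2 * a) * h1 ^+ 2) -> (k <= E)%N) ->
  Good N a t1 t2 h1 h2 (minn (minn a (N - a + t1)) E).
Proof.
move=> l1 l2 l3 Hu l4 HE1 HE2.
have [y [z [Ea En [Ee1 Ee2 Ee3]]]] : exists y z, [/\ (a = t1 + y)%N, (N = a + y + z)%N &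
   [/\ (N + 2 * t1 - 2 * a = z + t1)%N, (N - a + t2 = y + z + t2)%N &
       (N - a + t1 = y + z + t1)%N]].
  by exists (a - t1)%N, (N - a - (a - t1))%N; (split; [lia|lia|split; lia]).
rewrite Ee1 Ee2 in HE1 HE2; rewrite Ee3; subst N; subst a.
set X := f ^+ (y + z + t2) * h2 - f ^+ (z + t1) * h1 ^+ 2 in HE1 HE2.
set e := minn (minn (t1 + y) (y + z + t1)) E.
have eN : (e <= t1 + y + y + z)%N by rewrite /e; lia.
split.
  have : e = (t1 + y)%N \/ e = (y + z + t1)%N \/ (e = E /\ (E < t1 + y + y + z)%N).
    by rewrite /e; lia.
  case=> [->|[->|[-> EN]]].
  - exact: wit0.
  - exists 0, (f ^+ (y + z) * v1), 0; split.
    + by rewrite mul0r dvdp0.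
    + by apply: (dvd_by (q := v1)); rewrite !exprD; ring.
    + apply: (dvd_mul_eq (q := - f ^+ (y + z + t1)) Hu).
      by rewrite !exprD; ring.
  - have [c [Hc nc]] := exact HE1 (HE2 EN).
    have [V HV] := finv (t1 + y + y + z) nc.
    exists (f ^+ (y + z) * V), (- (f ^+ z * V * h1)), 0; split.
    + by apply: (dvd_by (q := V)); rewrite !exprD; ring.
    + by apply: (dvd_by (q := 0)); rewrite !exprD; ring.
    + apply: (dvd_sum2 (q1 := V) (q2 := - f ^+ E) Hc HV).
      by rewrite /X !exprD; ring.
move=> k [r0 [r1 [r2 [G1 G2 G3]]]].
have : f ^+ ((t1 + y) + (y + z)) %| f ^+ (t1 + y) * r0 by rewrite !addnA mulrC.
move/fcancel/dvdpP => [c0 Ec0]; subst r0.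
rewrite (_ : r1 * f ^+ (t1 + y) + c0 * f ^+ (y + z) * (f ^+ t1 * h1) =
   f ^+ (t1 + y) * (r1 + c0 * f ^+ z * h1)) in G2; last by rewrite !exprD; ring.
have : f ^+ ((t1 + y) + (y + z)) %| f ^+ (t1 + y) * (r1 + c0 * f ^+ z * h1).
  by rewrite !addnA.
move/fcancel/dvdpP => [q Eq].
have Er1 : r1 = q * f ^+ (y + z) - c0 * f ^+ z * h1 by rewrite -Eq addrK.
subst r1.
apply: (lb eN _ G3).
have dX : f ^+ e %| X.
  apply: (div_dvd eN); apply: div_weak HE1; rewrite /e; lia.
have le1 : (e <= t1 + y)%N by rewrite /e; lia.
have le2 : (e <= y + z + t1)%N by rewrite /e; lia.
apply: (dvd_sum3 (q1 := r2) (q2 := q * h1) (q3 := c0) (fdvd le1) (fdvd le2) dX).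
by rewrite /X !exprD; ring.
Qed.

Lemma case6 N a t1 t2 h1 h2 v v2 E : (t2 < t1)%N -> (t1 < a)%N -> (a < N)%N ->
  f ^+ N %| h1 * v - 1 -> f ^+ N %| h2 * v2 - 1 -> (N - a + t1 <= a)%N ->
  divides1 (f ^+ N) (f ^+ E) (f ^+ t1 * h1 - f ^+ (a + t2 - t1) * h2 * v) ->
  ((E < N)%N -> forall k, divides1 (f ^+ N) (f ^+ k)
    (f ^+ t1 * h1 - f ^+ (a + t2 - t1) * h2 * v) -> (k <= E)%N) ->
  Good N a t1 t2 h1 h2 (minn (minn a (N + t2 - t1)) E).
Proof.
move=> l1 l2 l3 Hu Hu2 l4 HE1 HE2.
have [n [z [Ea En [Ee1 Ee2]]]] : exists n z, [/\ (a = t1 + n + z)%N, (N = a + n)%N &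
   (a + t2 - t1 = n + z + t2)%N /\ (N + t2 - t1 = n + z + n + t2)%N].
  by exists (N - a)%N, (a - t1 - (N - a))%N; (split; [lia|lia|split; lia]).
rewrite Ee1 in HE1 HE2; rewrite Ee2; subst N; subst a.
set X := f ^+ t1 * h1 - f ^+ (n + z + t2) * h2 * v in HE1 HE2.
have N0 : (0 < t1 + n + z + n)%N by lia.
have [nh1 nv] := unit_nd N0 Hu.
have [nh2 _] := unit_nd N0 Hu2.
have B1 : (t1 < n + z + t2)%N -> (E <= t1)%N.
  move=> h; rewrite leqNgt; apply/negP => hE.
  have le1 : (t1.+1 <= t1 + n + z + n)%N by lia.
  have := div_dvd le1 (div_weak hE HE1).
  rewrite /X dvdp_subl; last first.
    by rewrite -mulrA; apply: dvdp_mulr; apply: fdvd.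
  rewrite -addn1 => /fcancel; rewrite expr1.
  by apply/negP.
have B2 : (n + z + t2 < t1)%N -> (E <= n + z + t2)%N.
  move=> h; rewrite leqNgt; apply/negP => hE.
  have le1 : ((n + z + t2).+1 <= t1 + n + z + n)%N by lia.
  have := div_dvd le1 (div_weak hE HE1).
  rewrite /X dvdp_subr; last first.
    by apply: dvdp_mulr; apply: fdvd.
  rewrite -mulrA -addn1 => /fcancel Hg; move: (gauss nv Hg).
  by rewrite expr1; apply/negP.
have -> : minn (minn (t1 + n + z) (n + z + n + t2)) E =
          minn (minn (t1 + n + z) (n + t1)) E.
  case: (ltngtP t1 (n + z + t2)) => h.
  - have := B1 h; lia.
  - have := B2 h; lia.
  - lia.
set e := minn (minn (t1 + n + z) (n + t1)) E.
have eN : (e <= t1 + n + z + n)%N by rewrite /e; lia.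
split.
  have : e = (t1 + n + z)%N \/ e = (n + t1)%N \/ (e = E /\ (E < t1 + n + z + n)%N).
    by rewrite /e; lia.
  case=> [->|[->|[-> EN]]].
  - exact: wit0.
  - exists 0, (f ^+ n * v), 0; split.
    + by rewrite mul0r dvdp0.
    + by apply: (dvd_by (q := v)); rewrite !exprD; ring.
    + apply: (dvd_mul_eq (q := - f ^+ (n + t1)) Hu).
      by rewrite !exprD; ring.
  - have [c [Hc nc]] := exact HE1 (HE2 EN).
    have [V HV] := finv (t1 + n + z + n) nc.
    exists (- (f ^+ (n + z) * v * V)), (v * V * h1), 0; split.
    + by apply: (dvd_by (q := - (v * V * f ^+ z))); rewrite !exprD; ring.
    + by apply: (dvd_by (q := 0)); rewrite !exprD; ring.
    + apply: (dvd_sum3 (q1 := - (f ^+ E * v * h1))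
         (q2 := - f ^+ E - f ^+ (n + z + t2) * v * V * h2) (q3 := v * h1 * V) HV Hu Hc).
      by rewrite /X !exprD; ring.
move=> k [r0 [r1 [r2 [G1 G2 G3]]]].
have : f ^+ ((t1 + n + z) + n) %| f ^+ (t1 + n + z) * r0 by rewrite mulrC.
move/fcancel/dvdpP => [c0 Ec0]; subst r0.
have : f ^+ (t1 + n + z) %| c0 * f ^+ n * (f ^+ t1 * h1).
  have := dvdp_trans (fdvd (leq_addr n (t1 + n + z))) G2.
  by rewrite dvdp_addr // dvdp_mull.
rewrite (_ : c0 * f ^+ n * (f ^+ t1 * h1) = f ^+ (n + t1) * c0 * h1); last first.
  by rewrite !exprD; ring.
move=> Hg; move: (gauss nh1 Hg); rewrite (_ : (t1 + n + z = n + t1 + z)%N); last by lia.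
move/fcancel/dvdpP => [d0 Ed0]; subst c0.
rewrite (_ : r1 * f ^+ (t1 + n + z) + d0 * f ^+ z * f ^+ n * (f ^+ t1 * h1) =
   f ^+ (t1 + n + z) * (r1 + d0 * h1)) in G2; last by rewrite !exprD; ring.
move/fcancel/dvdpP: G2 => [q Eq].
have Er1 : r1 = q * f ^+ n - d0 * h1 by rewrite -Eq addrK.
subst r1.
apply: (lb eN _ G3).
have dX : f ^+ e %| X.
  apply: (div_dvd eN); apply: div_weak HE1; rewrite /e; lia.
have le1 : (e <= t1 + n + z)%N by rewrite /e; lia.
have le2 : (e <= n + t1)%N by rewrite /e; lia.
apply: (dvd_sum4 (q1 := r2) (q2 := q * h1) (q3 := - (d0 * h1))
   (q4 := - (d0 * f ^+ (n + z + t2) * h2)) (fdvd le1) (fdvd le2) dX (hd eN Hu)).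
by rewrite /X !exprD; ring.
Qed.

Lemma pin N a t1 t2 h1 h2 e L : Good N a t1 t2 h1 h2 e ->
  IMem (f ^+ N) (f ^+ a) (f ^+ t1 * h1) (f ^+ t2 * h2) (f ^+ L) ->
  (forall k, IMem (f ^+ N) (f ^+ a) (f ^+ t1 * h1) (f ^+ t2 * h2) (f ^+ k) -> (L <= k)%N) ->
  L = e.
Proof.
by move=> [G1 G2] M H; apply/eqP; rewrite eqn_leq H // G2.
Qed.

Lemma maxN N X b : divides1 (f ^+ N) (f ^+ b) X ->
  (forall k, divides1 (f ^+ N) (f ^+ k) X -> (k <= b)%N) -> (b < N)%N.
Proof.
move=> [c Hc] Hmax; rewrite ltnNge; apply/negP => Nb.
have HX : f ^+ N %| X.
  by move: Hc; rewrite dvdp_subr // dvdp_mulr // fdvd.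
suff : (b.+1 <= b)%N by rewrite ltnn.
apply: Hmax.
by exists 0; rewrite mulr0 sub0r dvdpNr.
Qed.

End Val.

Unset Implicit Arguments. Set Strict Implicit.

Theorem proposition4p2 (p m s : nat) (F : finFieldType) (f h1 h2 : {poly F})
    (a t1 t2 L : nat) :
  prime p -> (0 < m)%N -> #|F| = (p ^ m)%N -> irreducible_poly f ->
  (t2 < t1)%N -> (t1 < a)%N -> (a <= p ^ s - 1)%N ->
  is_zero1 (f ^+ (p ^ s)) h1 \/ is_unit1 (f ^+ (p ^ s)) h1 ->
  is_zero1 (f ^+ (p ^ s)) h2 \/ is_unit1 (f ^+ (p ^ s)) h2 ->
  least_exp (f ^+ (p ^ s)) f (gen4 f a t1 t2 h1 h2) L ->
  (is_zero1 (f ^+ (p ^ s)) h1 -> is_zero1 (f ^+ (p ^ s)) h2 -> L = a) /\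
      (is_zero1 (f ^+ (p ^ s)) h1 -> ~ is_zero1 (f ^+ (p ^ s)) h2 ->
         L = minn a (p ^ s - a + t2)) /\
      (~ is_zero1 (f ^+ (p ^ s)) h1 -> is_zero1 (f ^+ (p ^ s)) h2 ->
         (a <= p ^ s - a + t1)%N -> L = minn a (p ^ s + 2 * t1 - 2 * a)) /\
      (~ is_zero1 (f ^+ (p ^ s)) h1 -> is_zero1 (f ^+ (p ^ s)) h2 ->
         (p ^ s - a + t1 <= a)%N -> L = t1) /\
      (~ is_zero1 (f ^+ (p ^ s)) h1 -> ~ is_zero1 (f ^+ (p ^ s)) h2 ->
         (a <= p ^ s - a + t1)%N ->
         eq_min_beta (f ^+ (p ^ s)) f
           (f ^+ (p ^ s - a + t2) * h2 - f ^+ (p ^ s + 2 * t1 - 2 * a) * h1 ^+ 2)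
           (minn a (p ^ s - a + t1)) L) /\
      (~ is_zero1 (f ^+ (p ^ s)) h1 -> ~ is_zero1 (f ^+ (p ^ s)) h2 ->
         (p ^ s - a + t1 <= a)%N ->
         forall v : {poly F}, (f ^+ (p ^ s)) %| h1 * v - 1 ->
         eq_min_beta (f ^+ (p ^ s)) f
           (f ^+ t1 * h1 - f ^+ (a + t2 - t1) * h2 * v)
           (minn a (p ^ s + t2 - t1)) L).
Proof.
move=> Hp _ _ Hf l1 l2 l3 D1 D2 [Hmem Hmin].
have HN : (0 < (p ^ s)%N)%N by rewrite expn_gt0 prime_gt0.
have l3' : (a < p ^ s)%N by rewrite -(prednK HN) ltnS -subn1.
rewrite /gen4 in Hmem Hmin.
move/mem_iff: Hmem => Hmem.
have {}Hmin : forall k, IMem (f ^+ (p ^ s)) (f ^+ a) (f ^+ t1 * h1) (f ^+ t2 * h2) (f ^+ k)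
    -> (L <= k)%N.
  by move=> k /mem_iff; apply: Hmin.
set N := (p ^ s)%N in HN l3' Hmem Hmin D1 D2 l3 *.
have pinG : forall e, Good f N a t1 t2 h1 h2 e -> L = e.
  by move=> e G; apply: pin G Hmem Hmin.
rewrite /is_zero1 in D1 D2 *.
split.
  by move=> Z1 Z2; apply: pinG; apply: case1 => //; lia.
split.
  move=> Z1 NZ2; have [v2 Hv2] : is_unit1 (f ^+ N) h2 by case: D2.
  by apply: pinG; apply: case2 Hv2.
split.
  move=> NZ1 Z2 h; have [v1 Hv1] : is_unit1 (f ^+ N) h1 by case: D1.
  by apply: pinG; apply: case3 Hv1 Z2 h.
split.
  move=> NZ1 Z2 h; have [v1 Hv1] : is_unit1 (f ^+ N) h1 by case: D1.
  by apply: pinG; apply: case4 Hv1 Z2 h.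
split.
  move=> NZ1 NZ2 h; have [v1 Hv1] : is_unit1 (f ^+ N) h1 by case: D1.
  split.
    move=> b [Hb Hmax].
    by apply: pinG; apply: (case5 Hf l1 l2 l3' Hv1 h Hb (fun _ => Hmax)).
  move=> Hall.
  have -> : minn a (N - a + t1) = minn (minn a (N - a + t1)) N by lia.
  apply: pinG; apply: (case5 Hf l1 l2 l3' Hv1 h (Hall N)).
  by rewrite ltnn.
move=> NZ1 NZ2 h v Hv; have [v2 Hv2] : is_unit1 (f ^+ N) h2 by case: D2.
split.
  move=> b [Hb Hmax].
  by apply: pinG; apply: (case6 Hf l1 l2 l3' Hv Hv2 h Hb (fun _ => Hmax)).
move=> Hall.
have -> : minn a (N + t2 - t1) = minn (minn a (N + t2 - t1)) N by lia.
apply: pinG; apply: (case6 Hf l1 l2 l3' Hv Hv2 h (Hall N)).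
by rewrite ltnn.
Qed.
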